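(* There exists a RobMCF instance on an acyclic digraph with two scenarios $\Lambda=\{1,2\}$, a unique source $s$ and a unique sink $t$, with $b^1(s)<b^2(s)$, and an optimal robust $\boldsymbol b$-flow $\boldsymbol f=(f^1,f^2)$ such that $c(f^2)<c(f^1)=c(\boldsymbol f)$; i.e., the cost of an optimal robust flow is not necessarily attained by the scenario flow sending the maximum demand.
   Context: A RobMCF instance $(G,u,c,\boldsymbol b)$ consists of a finite directed graph (parallel arcs allowed) $G=(V,A)$ whose arc set is partitioned as $A=A^{\mathrm{fix}}\cup A^{\mathrm{free}}$ into fixed and free arcs, capacities $u:A\to\mathbb Z_{\ge0}$, costs $c:A\to\mathbb Z_{\ge0}$, a finite nonempty set of scenarios $\Lambda$, and for each $\lambda\in\Lambda$ balances $b^\lambda:V\to\mathbb Z$ with $\sum_{v\in V}b^\lambda(v)=0$; $\boldsymbol b=(b^\lambda)_{\lambda\in\Lambda}$. A $b^\lambda$-flow is a function $f^\lambda:A\to\mathbb Z_{\ge0}$ with $f^\lambda(a)\le u(a)$ for all $a\in A$ and $\sum_{a=(v,w)\in A}f^\lambda(a)-\sum_{a=(w,v)\in A}f^\lambda(a)=b^\lambda(v)$ for all $v\in V$ (outflow minus inflow); its cost is $c(f^\lambda)=\sum_{a\in A}c(a)f^\lambda(a)$. A robust $\boldsymbol b$-flow is a tuple $\boldsymbol f=(f^\lambda)_{\lambda\in\Lambda}$ of $b^\lambda$-flows with $f^\lambda(a)=f^{\lambda'}(a)$ for all $a\in A^{\mathrm{fix}}$ and all $\lambda,\lambda'\in\Lambda$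 (consistent flow constraints); its cost is $c(\boldsymbol f)=\max_{\lambda\in\Lambda}c(f^\lambda)$. An optimal robust $\boldsymbol b$-flow is one of minimum cost. A vertex $v$ is a source (sink) in scenario $\lambda$ if $b^\lambda(v)>0$ ($b^\lambda(v)<0$). The instance has a unique source $s$ (unique sink $t$) if in every scenario $s$ is the only source ($t$ is the only sink). *)

(* Defs.v *)
From mathcomp Require Import all_boot all_order all_algebra.
Set Implicit Arguments. Unset Strict Implicit. Unset Printing Implicit Defensive.
Import Order.TTheory GRing.Theory Num.Theory.

Record digraph := Digraph {
  dV : finType;
  dA : finType;
  tail : dA -> dV;
  head : dA -> dV }.

Definition is_walk (G : digraph) (p : seq (dA G)) : bool :=
  match p with
  | [::] => true
  | a :: q => path (fun x y => head x == tail y) a q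
  end.

Definition acyclic (G : digraph) : Prop :=
  forall (a : dA G) (q : seq (dA G)),
    is_walk (a :: q) -> head (last a q) <> tail a.

Record robmcf (L : finType) := RobMCF {
  graph : digraph;
  fixed : pred (dA graph);           (* A^fix; A^free is its complement *)
  cap : dA graph -> nat;
  cost : dA graph -> nat;
  bal : L -> dV graph -> int }.
Arguments graph {L}. Arguments fixed {L}. Arguments cap {L}.
Arguments cost {L}. Arguments bal {L}.

Definition balanced {L : finType} (I : robmcf L) : Prop :=
  forall l : L, (\sum_(v : dV (graph I)) bal I l v = 0)%R.

Definition is_bflow {L : finType} {I : robmcf L} (l : L)
    (f : dA (graph I) -> nat) : Prop :=
  (forall a, f a <= cap I a) /\
  (forall v : dV (graph I),
     ((\sum_(a | tail a == v) (f a)%:Z) - (\sum_(a | head a == v) (f a)%:Z))%R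
       = bal I l v).

Definition flow_cost {L : finType} {I : robmcf L} (f : dA (graph I) -> nat) : nat :=
  \sum_(a : dA (graph I)) cost I a * f a.

Definition is_robust_flow {L : finType} {I : robmcf L}
    (f : L -> dA (graph I) -> nat) : Prop :=
  (forall l, is_bflow l (f l)) /\
  (forall a l l', fixed I a -> f l a = f l' a).

Definition robust_cost {L : finType} {I : robmcf L}
    (f : L -> dA (graph I) -> nat) : nat :=
  \max_(l : L) flow_cost (f l).

Definition optimal_robust_flow {L : finType} {I : robmcf L}
    (f : L -> dA (graph I) -> nat) : Prop :=
  is_robust_flow f /\
  forall g : L -> dA (graph I) -> nat, is_robust_flow g -> robust_cost f <= robust_cost g.

Definition is_source {L : finType} (I : robmcf L) (l : L) (v : dV (graph I)) :=
  (0 < bal I l v)%R.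
Definition is_sink {L : finType} (I : robmcf L) (l : L) (v : dV (graph I)) :=
  (bal I l v < 0)%R.

Definition unique_source {L : finType} (I : robmcf L) (s : dV (graph I)) : Prop :=
  forall l v, @is_source L I l v <-> v = s.
Definition unique_sink {L : finType} (I : robmcf L) (t : dV (graph I)) : Prop :=
  forall l v, @is_sink L I l v <-> v = t.

(* Main.v *)
Require Import Defs.
From mathcomp Require Import all_boot all_order all_algebra zify.
Import Order.TTheory GRing.Theory Num.Theory.
Local Open Scope ring_scope.

Definition v0 : 'I_4 := @Ordinal 4 0 isT.
Definition v1 : 'I_4 := @Ordinal 4 1 isT.
Definition v2 : 'I_4 := @Ordinal 4 2 isT.
Definition v3 : 'I_4 := @Ordinal 4 3 isT.
Definition tl (a : 'I_5) : 'I_4 := nth v0 [:: v0; v2; v1; v0; v1] a.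
Definition hd (a : 'I_5) : 'I_4 := nth v0 [:: v1; v3; v3; v2; v2] a.
Definition G := Digraph tl hd.
Definition balf (l : 'I_2) (v : 'I_4) : int :=
  if val v == 0 then (val l).+1%N%:Z else if val v == 3 then - (val l).+1%N%:Z else 0.
Definition I : robmcf 'I_2 :=
  @RobMCF _ G (fun a : 'I_5 => (val a <= 1)%N) (fun _ => 1) (fun a : 'I_5 => if val a == 4 then 10%N else 0%N) balf.

Definition e0 : 'I_5 := @Ordinal 5 0 isT.
Definition e1 : 'I_5 := @Ordinal 5 1 isT.
Definition e2 : 'I_5 := @Ordinal 5 2 isT.
Definition e3 : 'I_5 := @Ordinal 5 3 isT.
Definition e4 : 'I_5 := @Ordinal 5 4 isT.
Lemma sum5 (F : 'I_5 -> int) : \sum_a F a = F e0 + F e1 + F e2 + F e3 + F e4.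
Proof.
rewrite !big_ord_recr big_ord0 /= add0r.
by congr (_+_+_+_+_); congr F; apply: val_inj.
Qed.
Lemma cons_v (g : 'I_5 -> nat) :
  let C v := ((\sum_(a | tl a == v) (g a)%:Z) - (\sum_(a | hd a == v) (g a)%:Z))%R in
  [/\ C v0 = (g e0)%:Z + (g e3)%:Z, C v1 = (g e2)%:Z + (g e4)%:Z - (g e0)%:Z,
      C v2 = (g e1)%:Z - (g e3)%:Z - (g e4)%:Z & C v3 = - ((g e1)%:Z + (g e2)%:Z)].
Proof.
move=> C; split; rewrite /C big_mkcond sum5 big_mkcond sum5 /=; lia.
Qed.
Lemma sum5n (F : 'I_5 -> nat) : (\sum_a F a = F e0 + F e1 + F e2 + F e3 + F e4)%N.
Proof.
rewrite !big_ord_recr big_ord0 /= add0n.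
by congr (_+_+_+_+_)%N; congr F; apply: val_inj.
Qed.
Lemma ord4P (v : 'I_4) : [\/ v = v0, v = v1, v = v2 | v = v3].
Proof.
case: v => [[|[|[|[|n]]]] Hv] //.
- by constructor 1; apply: val_inj.
- by constructor 2; apply: val_inj.
- by constructor 3; apply: val_inj.
- by constructor 4; apply: val_inj.
Qed.
Lemma ord2P (l : 'I_2) : l = ord0 \/ l = ord_max.
Proof.
case: l => [[|[|n]] Hv] //.
- by left; apply: val_inj.
- by right; apply: val_inj.
Qed.
Lemma ord5P (a : 'I_5) : a = e0 \/ [\/ a = e1, a = e2, a = e3 | a = e4].
Proof.
case: a => [[|[|[|[|[|n]]]]] Hv] //.
- by left; apply: val_inj.
- by right; constructor 1; apply: val_inj.
- by right; constructor 2; apply: val_inj.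
- by right; constructor 3; apply: val_inj.
- by right; constructor 4; apply: val_inj.
Qed.
Lemma arc_up (a : 'I_5) : (nat_of_ord (tl a) < nat_of_ord (hd a))%N.
Proof. by case: (ord5P a) => [|[|||]] ->. Qed.

Lemma walk_up (q : seq 'I_5) (a : 'I_5) :
  path (fun x y => hd x == tl y) a q -> (nat_of_ord (tl a) < nat_of_ord (hd (last a q)))%N.
Proof.
elim: q a => [|b q IH] a /=; first by move=> _; exact: arc_up.
move=> /andP [/eqP Hab Hp].
have := IH b Hp. have := arc_up a. rewrite Hab. lia.
Qed.

Definition fl (l : 'I_2) (a : 'I_5) : nat :=
  nth 0%N (if val l == 0%N then [:: 1; 1; 0; 0; 1]%N else [:: 1; 1; 1; 1; 0]%N) a.

Theorem mainTheorem4 :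
  exists (I : robmcf 'I_2) (s t : dV (graph I))
         (f : 'I_2 -> dA (graph I) -> nat),
    acyclic (graph I) /\ balanced I /\
    unique_source s /\ unique_sink t /\
    (bal I ord0 s < bal I ord_max s)%R /\
    optimal_robust_flow f /\
    (flow_cost (f ord_max) < flow_cost (f ord0))%N /\
    flow_cost (f ord0) = robust_cost f.
Proof.
have Hrob : @is_robust_flow _ I fl.
  split; last by move=> a l l' /= Ha; case: (ord2P l) => ->; case: (ord2P l') => ->;
     case: (ord5P a) Ha => [|[|||]] ->.
  move=> l; split.
    by move=> a; case: (ord2P l) => ->; case: (ord5P a) => [|[|||]] ->.
  move=> v; case: (cons_v (fl l)) => /= H0 H1 H2 H3.
  case: (ord4P v) => [] ->; [rewrite H0|rewrite H1|rewrite H2|rewrite H3];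
    by case: (ord2P l) => ->.
exists I, v0, v3, fl.
split.
  move=> a q /= Hw Heq.
  have := @walk_up q a Hw. rewrite /= in Heq. rewrite Heq. lia.
split.
  move=> l; rewrite /= !big_ord_recr big_ord0 /=.
  by case: (ord2P l) => ->.
split.
  move=> l v; rewrite /is_source /=.
  by case: (ord2P l) => ->; case: (ord4P v) => [] ->.
split.
  move=> l v; rewrite /is_sink /=.
  by case: (ord2P l) => ->; case: (ord4P v) => [] ->.
split; first by [].
have Hrc : robust_cost (I := I) fl = 10%N.
  by rewrite /robust_cost !big_ord_recr big_ord0 /= /flow_cost !sum5n.
split.
  split => // g [Hg Hfix].
  rewrite Hrc.
  have [Hc2 C2] := Hg ord_max. have [Hc1 C1] := Hg ord0.
  case: (cons_v (g ord_max)) => A0 _ _ A3.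
  case: (cons_v (g ord0)) => B0 _ B2 _.
  have F0 := Hfix e0 ord0 ord_max isT.
  have F1 := Hfix e1 ord0 ord_max isT.
  have E0 := C2 v0. rewrite A0 /= /balf /= in E0.
  have E3 := C2 v3. rewrite A3 /= /balf /= in E3.
  have D0 := C1 v0. rewrite B0 /= /balf /= in D0.
  have D2 := C1 v2. rewrite B2 /= /balf /= in D2.
  have := Hc2 e0. have := Hc2 e1. have := Hc2 e2. have := Hc2 e3.
  have := Hc1 e0. have := Hc1 e3. rewrite /= => *.
  apply: (leq_trans _ (leq_bigmax ord0)).
  rewrite /flow_cost sum5n /=.
  lia.
rewrite Hrc /flow_cost !sum5n /=.
by [].
Qed.
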